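(* Let $\mathcal{T}$ be a finite set and let $\mathbf{p},\mathbf{q}$ be probability measures on $\mathcal{T}$. Write $\mathbf{h}_{\mathbf{p},\mathbf{q}}(x) = \mathbf{q}(x) - \mathbf{p}(x)$. Let $\prec$ be any strict total order on $\mathcal{T}$ such that $\mathbf{h}_{\mathbf{p},\mathbf{q}}(x) > \mathbf{h}_{\mathbf{p},\mathbf{q}}(x')$ implies $x \prec x'$ and $\mathbf{h}_{\mathbf{p},\mathbf{q}}(x) < \mathbf{h}_{\mathbf{p},\mathbf{q}}(x')$ implies $x' \prec x$. Let $X_\mathbf{p} \sim \mathbf{p}$ and $Y_\mathbf{q} \sim \mathbf{q}$ be independent and define $R_{\mathbf{p},\mathbf{q}}$ to be $0$ if $Y_\mathbf{q} \prec X_\mathbf{p}$, $1$ if $X_\mathbf{p} \prec Y_\mathbf{q}$, and an independent $\mathrm{Bernoulli}(1/2)$ random variable if $X_\mathbf{p} = Y_\mathbf{q}$. Then $$\Pr[R_{\mathbf{p},\mathbf{q}} = 0] \ge \frac12 + \frac12\Big(\max_{x\in\mathcal{T}} \mathbf{h}_{\mathbf{p},\mathbf{q}}(x)\Big)^2.$$ *)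

(* Defs.v *)
From mathcomp Require Import all_boot all_order all_algebra.
Set Implicit Arguments. Unset Strict Implicit. Unset Printing Implicit Defensive.
Import Order.TTheory GRing.Theory Num.Theory.
Local Open Scope ring_scope.

Definition is_pmf (R : realFieldType) (T : finType) (p : T -> R) : Prop :=
  (forall x, 0 <= p x) /\ \sum_(x : T) p x = 1.

Definition strict_total_order (T : finType) (lt : rel T) : Prop :=
  [/\ irreflexive lt, transitive lt & forall x y, x != y -> lt x y || lt y x].

Definition hpq (R : realFieldType) (T : finType) (p q : T -> R) (x : T) : R :=
  q x - p x.

(* R_{p,q} as a function of the outcome (X, Y, B), where B is the
   independent fair coin used when X = Y. *)
Definition Rpq (T : finType) (lt : rel T) (x y : T) (b : bool) : nat :=
  if lt y x then 0%N else if lt x y then 1%N else nat_of_bool b.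

(* Pr[R_{p,q} = 0] on the product probability space T * T * bool with
   law p (x) q (x) Bernoulli(1/2) (X, Y, B independent). *)
Definition prob_R0 (R : realFieldType) (T : finType) (lt : rel T)
    (p q : T -> R) : R :=
  \sum_(x : T) \sum_(y : T) \sum_(b : bool)
     (if Rpq lt x y b == 0%N then p x * q y * 2^-1 else 0).

(* Main.v *)
Require Import Defs.
From mathcomp Require Import all_boot all_order all_algebra.
From mathcomp Require Import ring lra.
Import Order.TTheory GRing.Theory Num.Theory.
Local Open Scope ring_scope.

Section Aux.
Variables (R : realFieldType) (T : finType) (lt : rel T).

Definition sg (x y : T) : R := if lt y x then 1 else if lt x y then -1 else 0.

Lemma sg_anti (Hlt : strict_total_order lt) x y : sg y x = - sg x y.
Proof.
case: Hlt => Hirr Htr _; rewrite /sg.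
case Hyx: (lt y x); case Hxy: (lt x y) => //=; rewrite ?opprK ?oppr0 //.
by have := Htr _ _ _ Hyx Hxy; rewrite Hirr.
Qed.

Lemma sum_anti (Hlt : strict_total_order lt) (f : T -> R) :
  \sum_x \sum_y f x * f y * sg x y = 0.
Proof.
set S := (\sum_x _).
have: S = - S.
  rewrite {2}/S exchange_big /= -sumrN; apply: eq_bigr => x _.
  rewrite -sumrN; apply: eq_bigr => y _.
  rewrite (sg_anti Hlt y x); ring.
move=> HS; lra.
Qed.
End Aux.

Theorem propositionA18 (R : realFieldType) (T : finType) (p q : T -> R)
  (lt : rel T) :
  is_pmf p -> is_pmf q ->
  strict_total_order lt ->
  (forall x x', hpq p q x > hpq p q x' -> lt x x') ->
  (forall x x', hpq p q x < hpq p q x' -> lt x' x) ->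
  forall xmax : T, (forall x, hpq p q x <= hpq p q xmax) ->
  prob_R0 lt p q >= 2^-1 + 2^-1 * (hpq p q xmax) ^+ 2.
Proof.
move=> [p0 p1] [q0 q1] Hlt H1 H2 xmax Hmax.
have Hlt' := Hlt; case: Hlt' => Hirr Htr Htot.
have asym x y : lt x y -> ~~ lt y x.
  by move=> Hxy; apply/negP => Hyx; have := Htr _ _ _ Hxy Hyx; rewrite Hirr.
set h := hpq p q.
set m := h xmax.
set D := \sum_x \sum_y p x * q y * sg R T lt x y.
have E0 : \sum_x \sum_y p x * q y * 2^-1 = 2^-1 :> R.
  under eq_bigr => x _ do rewrite -mulr_suml -mulr_sumr q1 mulr1.
  by rewrite -mulr_suml p1 mul1r.
have E1 : prob_R0 lt p q = \sum_x \sum_y p x * q y * 2^-1 + 2^-1 * D.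
  rewrite /prob_R0.
  rewrite /D mulr_sumr -big_split /=; apply: eq_bigr => x _.
  rewrite mulr_sumr -big_split /=; apply: eq_bigr => y _.
  rewrite big_bool /= /Rpq /sg.
  case Hyx: (lt y x); case Hxy: (lt x y) => /=; lra.
rewrite E0 in E1.
have hsum : \sum_x h x = 0.
  by rewrite /h /hpq sumrB p1 q1 subrr.
have hmono x y : lt x y -> h y <= h x.
  move=> Hxy; rewrite leNgt; apply/negP => /H2 Hyx.
  by move: (asym _ _ Hxy); rewrite Hyx.
have m0 : 0 <= m.
  have : \sum_x h x <= \sum_(x : T) m by apply: ler_sum => x _; exact: Hmax.
  rewrite hsum sumr_const -mulr_natl => H.
  have Hn : 0 < (#|T|%:R : R) by rewrite ltr0n; apply/card_gt0P; exists xmax.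
  by rewrite -(pmulr_rge0 _ Hn).
set G := fun y => \sum_x h x * sg R T lt y x.
have ED : D = \sum_y q y * G y.
  have -> : D = \sum_x \sum_y q x * q y * sg R T lt x y
               - \sum_x \sum_y h x * q y * sg R T lt x y.
    rewrite -sumrB; apply: eq_bigr => x _; rewrite -sumrB; apply: eq_bigr => y _.
    rewrite /h /hpq; ring.
  rewrite sum_anti // sub0r exchange_big -sumrN; apply: eq_bigr => y _.
  rewrite /G mulr_sumr -sumrN; apply: eq_bigr => x _.
  rewrite (@sg_anti R T lt Hlt y x); ring.
have EG c y : G y = \sum_x h x * (sg R T lt y x + c).
  rewrite /G.
  have -> : \sum_x h x * (sg R T lt y x + c) = \sum_x h x * sg R T lt y x + (\sum_x h x) * c.
    by rewrite mulr_suml -big_split /=; apply: eq_bigr => x _; rewrite mulrDr.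
  by rewrite hsum mul0r addr0.
have termpos y x : 0 <= h y -> 0 <= h x * (sg R T lt y x + 1).
  move=> hy; rewrite /sg.
  case Hxy: (lt x y) => /=.
    have := hmono _ _ Hxy; lra.
  case Hyx: (lt y x) => /=; first lra.
  case: (eqVneq x y) => [->|ne]; first lra.
  by have := Htot _ _ ne; rewrite Hxy Hyx.
have termneg y x : h y < 0 -> 0 <= h x * (sg R T lt y x - 1).
  move=> hy; rewrite /sg.
  case Hxy: (lt x y) => /=; first lra.
  case Hyx: (lt y x) => /=.
    have := hmono _ _ Hyx; nra.
  case: (eqVneq x y) => [->|ne]; first lra.
  by have := Htot _ _ ne; rewrite Hxy Hyx.
have Gpos y : 0 <= G y.
  case: (lerP 0 (h y)) => hy.
    by rewrite (EG 1); apply: sumr_ge0 => x _; exact: termpos.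
  by rewrite (EG (-1)); apply: sumr_ge0 => x _; exact: termneg.
have Gmax : m <= G xmax.
  rewrite (EG 1) (bigD1 xmax) //=.
  have -> : sg R T lt xmax xmax = 0 by rewrite /sg Hirr.
  rewrite add0r mulr1 lerDl; apply: sumr_ge0 => x _; exact: termpos.
have qmax : m <= q xmax by rewrite /m /h /hpq; have := p0 xmax; lra.
have DG : q xmax * G xmax <= D.
  rewrite ED (bigD1 xmax) //= lerDl; apply: sumr_ge0 => x _.
  by apply: mulr_ge0.
rewrite E1 lerD2l ler_pM2l ?invr_gt0 ?ltr0n //.
apply: le_trans DG; rewrite expr2; apply: ler_pM => //.
Qed.
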